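(* Let $\beta>1$, $l\in(-1,0]$, $r=l+1$, and let $d$ be the $(-\beta,l)$-expansion. If every rational number $x\in[l,r)$ has eventually periodic $(-\beta,l)$-expansion $d(x)$, then $\beta$ is either a Pisot number or a Salem number.
   Context: For $\beta>1$ and $l\in(-1,0]$, $r=l+1$, the $(-\beta,l)$-transformation is $T:[l,r)\to[l,r)$, $T(x)=-\beta x-\lfloor -\beta x-l\rfloor$. The $(-\beta,l)$-expansion of $x\in[l,r)$ is the integer sequence $d(x)=x_1x_2x_3\cdots$ with $x_i=\lfloor -\beta T^{i-1}(x)-l\rfloor$. A Pisot number is a real algebraic integer $>1$ all of whose other conjugates have modulus $<1$; a Salem number is a real algebraic integer $>1$ all of whose other conjugates have modulus $\le1$, with at least one conjugate of modulus exactly $1$. *)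

(* Defs.v *)
From HB Require Import structures.
From mathcomp Require Import all_boot all_order all_algebra.
From mathcomp Require Import reals.
From mathcomp Require Import complex.
Set Implicit Arguments. Unset Strict Implicit. Unset Printing Implicit Defensive.
Import Order.TTheory GRing.Theory Num.Theory.
Local Open Scope ring_scope.

Section NegBeta.
Variable R : realType.

Definition negbeta_T (beta l x : R) : R :=
  - beta * x - (Num.floor (- beta * x - l))%:~R.

(* Digits of the (-beta,l)-expansion: x_i = floor(-beta T^{i-1}(x) - l),
   indexed from 0 here: digit n = x_{n+1}. *)
Definition negbeta_digit (beta l x : R) (n : nat) : int :=
  Num.floor (- beta * iter n (negbeta_T beta l) x - l).

Definition eventually_periodic (u : nat -> int) : Prop :=
  exists N p : nat, (0 < p)%N /\ forall n, (N <= n)%N -> u (n + p)%N = u n.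

Definition is_rational (x : R) : Prop := exists q : rat, x = ratr q.

Definition is_minpoly (beta : R) (p : {poly rat}) : Prop :=
  p \is monic /\ root (map_poly ratr p) beta /\
  forall q : {poly rat}, q != 0 -> root (map_poly ratr q) beta ->
    (size p <= size q)%N.

Definition alg_int_minpoly (beta : R) (p : {poly rat}) : Prop :=
  is_minpoly beta p /\ forall i, p`_i \is a Num.int.

Definition other_conjugate (beta : R) (p : {poly rat}) (z : R[i]) : Prop :=
  root (map_poly ratr p) z /\ z != (beta%:C)%C.

Definition Pisot (beta : R) : Prop :=
  1 < beta /\ exists p, alg_int_minpoly beta p /\
    forall z : R[i], other_conjugate beta p z -> `|z| < 1.

Definition Salem (beta : R) : Prop :=
  1 < beta /\ exists p, alg_int_minpoly beta p /\
    (forall z : R[i], other_conjugate beta p z -> `|z| <= 1) /\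
    exists z : R[i], other_conjugate beta p z /\ `|z| = 1.

End NegBeta.

(* Main.v *)
Require Import Defs.
From HB Require Import structures.
From mathcomp Require Import all_boot all_order all_algebra.
From mathcomp Require Import reals complex.
From mathcomp Require Import ring lra zify.
From Stdlib Require Import Classical.
Import Order.TTheory GRing.Theory Num.Theory.
Local Open Scope ring_scope.

Section NC.
Context {R : realType}.
Definition nc (z : R[i]) : R := @complex.Re R `|z|.

Lemma ncE (z : R[i]) : `|z| = ((nc z)%:C)%C.
Proof. by rewrite /nc RRe_real // normr_real. Qed.

Lemma nc_ge0 z : 0 <= nc z.
Proof. by rewrite -lecR -ncE /= normr_ge0. Qed.

Lemma ncM x y : nc (x * y) = nc x * nc y.
Proof. by apply: (@complexI R); rewrite rmorphM /= -!ncE normrM. Qed.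

Lemma ncD x y : nc (x + y) <= nc x + nc y.
Proof. by rewrite -lecR rmorphD /= -!ncE ler_normD. Qed.

Lemma ncN x : nc (- x) = nc x.
Proof. by rewrite /nc normrN. Qed.

Lemma ncB x y : nc (x - y) <= nc x + nc y.
Proof. by rewrite -(ncN y) ncD. Qed.

Lemma ncX x n : nc (x ^+ n) = nc x ^+ n.
Proof. by apply: (@complexI R); rewrite rmorphXn /= -!ncE normrX. Qed.

Lemma nc_real (k : R) : nc ((k%:C)%C) = `|k|.
Proof.
apply: (@complexI R); rewrite -ncE normc_def /= expr0n /= addr0 sqrtr_sqr.
by [].
Qed.

Lemma nc_eq0 x : (nc x == 0) = (x == 0).
Proof. by rewrite -[x == 0]normr_eq0 ncE -[0 : R[i]]/((0:R)%:C)%C (inj_eq (@complexI R)). Qed.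

Lemma nc_lt x y : (nc x < nc y) = (`|x| < `|y|).
Proof. by rewrite !ncE ltcR. Qed.

Lemma nc_le x y : (nc x <= nc y) = (`|x| <= `|y|).
Proof. by rewrite !ncE lecR. Qed.

Lemma nc1 : nc 1 = 1.
Proof. by rewrite /nc normr1. Qed.
End NC.

Section MinPoly.
Context {R : realType}.

Lemma minpoly_ex0 (beta : R) n : forall Q : {poly rat}, (size Q <= n)%N -> Q != 0 ->
  root (map_poly ratr Q) beta -> exists p : {poly rat}, [/\ p != 0,
  root (map_poly ratr p) beta &
  forall q : {poly rat}, q != 0 -> root (map_poly ratr q) beta -> (size p <= size q)%N].
Proof.
elim: n => [|n IH] Q hs hQ hr.
  by move: hs; rewrite leqn0 size_poly_eq0 (negbTE hQ).
case: (classic (exists q : {poly rat}, [/\ q != 0, root (map_poly ratr q) beta &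
   (size q < size Q)%N])) => [[q [hq0 hqr hqs]]|h].
  by apply: (IH q) => //; rewrite -ltnS; apply: leq_trans hqs hs.
exists Q; split => // q hq hqr.
rewrite leqNgt; apply/negP => hlt; apply: h; by exists q.
Qed.

Lemma minpoly_ex (beta : R) (Q : {poly rat}) : Q != 0 -> root (map_poly ratr Q) beta ->
  exists p, is_minpoly beta p.
Proof.
move=> hQ hr; have [p0 [hp0 hr0 hmin]] := minpoly_ex0 beta (size Q) Q (leqnn _) hQ hr.
have hl : lead_coef p0 != 0 by rewrite lead_coef_eq0.
exists ((lead_coef p0)^-1 *: p0); split; [|split].
- by rewrite monicE lead_coefZ mulVf.
- by rewrite map_polyZ /= rootE hornerZ (rootP hr0) mulr0.
- by move=> q hq hqr; rewrite size_scale ?invr_eq0 //; apply: hmin.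
Qed.

Lemma minpoly_dvd (beta : R) p Q : is_minpoly beta p -> root (map_poly ratr Q) beta -> p %| Q.
Proof.
move=> [hm [hr hmin]] hQ.
have hp0 : p != 0 by apply: monic_neq0.
apply/modp_eq0P/eqP; apply/negPn/negP => hne.
have : root (map_poly ratr (Q %% p)) beta.
  move: hQ; rewrite {1}(divp_eq Q p) rmorphD rmorphM /= !rootE hornerD hornerM.
  by rewrite (rootP hr) mulr0 add0r.
move=> /(hmin _ hne); rewrite leqNgt ltn_modp hp0.
by [].
Qed.

Lemma dvd_root (F : numFieldType) (z : F) (p Q : {poly rat}) : p %| Q ->
  root (map_poly ratr p) z -> root (map_poly ratr Q) z.
Proof.
move=> /dvdpP [r ->] hr.
by rewrite rmorphM /= rootE hornerM (rootP hr) mulr0.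
Qed.
Lemma gauss_int (p M : {poly rat}) : p \is monic -> M \is monic ->
  M \is a polyOver Num.int -> p %| M -> forall i, p`_i \is a Num.int.
Proof.
move=> hp hM hMi hdvd.
have hMe := floorpK hMi.
rewrite -hMe in hdvd.
have [p1 [a ha hpa] [r hr]] := dvdpP_rat_int hdvd.
have hl : lead_coef (map_poly Num.floor M) = 1.
  apply: (@intr_inj rat); rewrite rmorph1 -(lead_coef_map_inj intr_inj) ?rmorph0 //.
  by rewrite hMe; apply/eqP; rewrite -monicE.
have hu : lead_coef p1 \is a intUnitRing.unitz.
  by apply: (@intUnitRing.unitzPl _ (lead_coef r)); rewrite mulrC -lead_coefM -hr.
have ha1 : a * (lead_coef p1)%:~R = 1.
  have := hp; rewrite monicE hpa lead_coefZ (lead_coef_map_inj intr_inj) ?rmorph0 //.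
  by move/eqP.
have hai : a \is a Num.int.
  move: hu; rewrite qualifE /= => /orP[] /eqP he; move: ha1; rewrite he.
    by rewrite mulr1 => ->; rewrite rpred1.
  by rewrite rmorphN rmorph1 mulrN1 => /eqP; rewrite eqr_oppLR => /eqP ->; rewrite rpredN rpred1.
move=> i; rewrite hpa coefZ coef_map /=.
by rewrite rpredM // rpred_int.
Qed.

End MinPoly.

Section Basic.
Variable R : realType.
Variables beta l : R.
Hypothesis hb : 1 < beta.
Hypothesis hl1 : -1 < l.
Hypothesis hl0 : l <= 0.

Ltac H := have hb' := hb; have hl1' := hl1; have hl0' := hl0.
Local Notation T := (negbeta_T beta l).
Local Notation dig := (negbeta_digit beta l).

Lemma T_range x : l <= T x < l + 1.
Proof.
H; rewrite /negbeta_T; have /andP[h1 h2] := floor_itv (- beta * x - l).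
rewrite intrD in h2; apply/andP; split; lra.
Qed.

Lemma iter_range n x : l <= x < l + 1 -> l <= iter n T x < l + 1.
Proof. by case: n => [//|n] _; rewrite iterS T_range. Qed.

Lemma iterT_S x n : iter n.+1 T x = - beta * iter n T x - (dig x n)%:~R.
Proof. by rewrite iterS. Qed.

Lemma dig_shift x n : dig x n.+1 = dig (T x) n.
Proof. by rewrite /negbeta_digit iterSr. Qed.

Lemma T_dig0 x : T x = - beta * x - (dig x 0)%:~R.
Proof. by []. Qed.

Lemma dig_bound x n : l <= x < l + 1 -> `|(dig x n)%:~R : R| <= beta + 1.
Proof.
move=> hx; H; rewrite /negbeta_digit.
have /andP[t1 t2] := iter_range n x hx.
move: t1 t2; set t := iter n _ x => t1 t2; clearbody t.
have /andP[h1 h2] := floor_itv (- beta * t - l).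
rewrite intrD rmorph1 in h2.
have e4 : beta * l <= 0 by rewrite pmulr_rle0; lra.
have e1 : beta * t <= beta * (l+1) by rewrite ler_pM2l; lra.
have e2 : beta * l <= beta * t by rewrite ler_pM2l; lra.
have e3 : beta * l >= - beta.
  have : 0 < beta * (l + 1) by apply: mulr_gt0; lra.
  lra.
rewrite ler_norml; apply/andP; split; lra.
Qed.

Lemma bernoulli (r : R) k : 1 <= r -> 1 + k%:R * (r - 1) <= r ^+ k.
Proof.
move=> hr; elim: k => [|k IH]; first by rewrite mul0r addr0 expr0.
rewrite exprS -natr1.
have h0 : 0 <= k%:R * (r - 1) by apply: mulr_ge0; rewrite ?ler0n //; lra.
have : r * (1 + k%:R * (r - 1)) <= r * r ^+ k by rewrite ler_pM2l ?IH //; lra.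
nra.
Qed.

Lemma archi_pow (r c : R) : 1 < r -> exists k, c < r ^+ k.
Proof.
move=> hr; have hr1 : 0 < r - 1 by lra.
have hq : 0 <= `|c| / (r - 1) by rewrite divr_ge0 // ltW.
have hn := archi_boundP hq.
exists (Num.bound (`|c| / (r - 1))).
have hb1 := bernoulli r (Num.bound (`|c| / (r - 1))) (ltW hr).
have : `|c| / (r - 1) * (r - 1) < (Num.bound (`|c| / (r - 1)))%:R * (r - 1).
  by rewrite ltr_pM2r.
rewrite divfK ?gt_eqF //.
have := ler_norm c.
lra.
Qed.

Lemma mulVb (y : R) : beta * (y / beta) = y.
Proof. H; rewrite mulrC divfK //; rewrite gt_eqF //; lra. Qed.

Lemma ltb (x y : R) : (x < y) = (beta * x < beta * y).
Proof. H; rewrite ltr_pM2l //; lra. Qed.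

Lemma leb (x y : R) : (x <= y) = (beta * x <= beta * y).
Proof. H; rewrite ler_pM2l //; lra. Qed.

Lemma cyl m : forall a b : R, a < b -> exists a' b',
  [/\ a <= a', a' < b', b' <= b &
   forall u v, a' < u < b' -> a' < v < b' -> forall k, (k < m)%N -> dig u k = dig v k].
Proof.
elim: m => [|m IH] a b hab.
  by exists a, b; split => //; rewrite lexx.
H.
set e := Num.floor (- beta * b - l).
have /andP[fe1 fe2] := floor_itv (- beta * b - l).
rewrite -/e intrD rmorph1 in fe1 fe2.
have [a1 [ha1 ha1b hq]] : exists a1, [/\ a <= a1, a1 < b & -l - e%:~R - 1 <= beta * a1].
  case: (lerP ((-l - e%:~R - 1)/beta) a) => h.
    exists a; split; rewrite ?lexx //.
    by move: h; rewrite leb mulVb.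
  exists ((-l - e%:~R - 1)/beta); split.
  - exact: ltW.
  - by rewrite ltb mulVb; lra.
  - by rewrite mulVb.
have hcd : - beta * b - e%:~R < - beta * a1 - e%:~R.
  by move: ha1b; rewrite ltb; lra.
have [c' [d' [hc hcd' hd hdig]]] := IH _ _ hcd.
exists ((- (d' + e%:~R)) / beta), ((- (c' + e%:~R)) / beta); split.
- by move: ha1; rewrite leb => ha1'; rewrite leb mulVb; lra.
- by rewrite ltb !mulVb; lra.
- by rewrite leb mulVb; lra.
move=> u v hu hv.
have key : forall w, - (d' + e%:~R) / beta < w < - (c' + e%:~R) / beta ->
   dig w 0 = e /\ c' < T w < d'.
  move=> w /andP[w1 w2].
  rewrite ltb mulVb in w1; rewrite ltb mulVb in w2.
  have hw : beta * a1 < beta * w by move: hd; lra.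
  have hw' : beta * w < beta * b by move: hc; lra.
  have he : dig w 0 = e.
    rewrite /negbeta_digit /=; apply: floor_def; rewrite intrD rmorph1.
    apply/andP; split; lra.
  by split => //; rewrite T_dig0 he; apply/andP; split; lra.
have [hu0 hu1] := key u hu; have [hv0 hv1] := key v hv.
case => [|k] hk; first by rewrite hu0 hv0.
by rewrite !dig_shift; apply: hdig.
Qed.

Lemma iter_periodic x N p : l <= x < l + 1 ->
  (forall n, (N <= n)%N -> dig x (n + p) = dig x n) ->
  iter (N + p) T x = iter N T x.
Proof.
move=> hx hper; H.
have step : forall k, iter (N + p + k) T x - iter (N + k) T x =
    (- beta) ^+ k * (iter (N + p) T x - iter N T x).
  elim => [|k IHk]; first by rewrite !addn0 expr0 mul1r.
  rewrite !addnS !iterT_S.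
  have -> : dig x (N + p + k) = dig x (N + k) by rewrite addnAC hper // leq_addr.
  by rewrite exprS -mulrA -IHk; ring.
apply/eqP; rewrite -subr_eq0; apply/negPn/negP => hne.
have hpos : 0 < `|iter (N + p) T x - iter N T x| by rewrite normr_gt0.
have [k hk] := archi_pow beta (`|iter (N + p) T x - iter N T x|^-1) hb.
have := step k.
have /andP[a1 a2] := iter_range (N + p + k) x hx.
have /andP[b1 b2] := iter_range (N + k) x hx.
move=> /(congr1 (fun z => `|z|)); rewrite normrM normrX normrN.
rewrite (ger0_norm (ltW (lt_trans ltr01 hb))).
move: hk; rewrite -(ltr_pM2r hpos) mulVf ?gt_eqF // => hk.
have : `|iter (N + p + k) T x - iter (N + k) T x| < 1.
  rewrite ltr_norml; apply/andP; split; lra.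
move=> h1 h2; rewrite h2 in h1; lra.
Qed.

Fixpoint Wp (q : rat) (x : R) (n : nat) : {poly rat} :=
  if n is n'.+1 then - 'X * Wp q x n' - ((dig x n')%:~R)%:P else q%:P.

Fixpoint wc (g : R[i]) (x : R) (n : nat) : R[i] :=
  if n is n'.+1 then - g * wc g x n' - (dig x n')%:~R else (x%:C)%C.

Lemma Wp_beta q n : (map_poly ratr (Wp q (ratr q) n)).[beta] = iter n T (ratr q).
Proof.
elim: n => [|n IH] /=; first by rewrite map_polyC hornerC.
rewrite rmorphB rmorphM /= rmorphN /= map_polyX !map_polyC /=.
by rewrite !hornerE IH -iterS iterT_S rmorph_int.
Qed.

Lemma ratrC (q : rat) : (ratr q : R[i]) = ((ratr q : R)%:C)%C.
Proof. by rewrite (fmorph_rat (real_complex R)). Qed.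

Lemma Wp_g q g n : (map_poly ratr (Wp q (ratr q) n)).[g] = wc g (ratr q) n.
Proof.
elim: n => [|n IH] /=; first by rewrite map_polyC hornerC; exact: ratrC.
rewrite rmorphB rmorphM /= rmorphN /= map_polyX !map_polyC /=.
by rewrite !hornerE IH rmorph_int.
Qed.

Lemma coefWS q x n i : (Wp q x n.+1)`_i =
  - (if i == 0%N then 0 else (Wp q x n)`_i.-1) - (if i == 0%N then (dig x n)%:~R else 0).
Proof. by rewrite /= coefB mulNr coefN coefXM coefC. Qed.

Lemma coefW_top q x n : (Wp q x n)`_n = (-1) ^+ n * q.
Proof.
elim: n => [|n IH]; first by rewrite /= coefC expr0 mul1r.
by rewrite coefWS /= IH subr0 exprS mulN1r mulNr.
Qed.

Lemma coefW_high q x n i : (n < i)%N -> (Wp q x n)`_i = 0.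
Proof.
elim: n i => [|n IH] [|i] //=.
- by move=> _; rewrite coefC.
- by move=> hi; rewrite coefWS /= IH // subr0 oppr0.
Qed.

Lemma sizeW q x n : (size (Wp q x n) <= n.+1)%N.
Proof. by apply/leq_sizeP => j hj; apply: coefW_high. Qed.

Lemma coefW_int q x n i : (i < n)%N -> (Wp q x n)`_i \is a Num.int.
Proof.
elim: n i => [|n IH] [|i] //= hi.
- by rewrite coefWS /= oppr0 sub0r rpredN rpred_int.
- by rewrite coefWS /= subr0 rpredN IH.
Qed.

Lemma rat_dense (s t : R) : s < t -> exists q : rat, s < ratr q < t.
Proof.
move=> hst; have hts : 0 < t - s by lra.
set N := (Num.bound ((t - s)^-1)).+1.
have hN : (t - s)^-1 < N%:R.
  apply: lt_le_trans (archi_boundP _) _; first by rewrite invr_ge0 ltW.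
  by rewrite ler_nat.
have hN0 : 0 < (N%:R : R) by rewrite ltr0n.
have hN1 : 1 < (t - s) * N%:R.
  by move: hN; rewrite -[(t - s)^-1]mulr1 ltr_pdivrMl.
exists ((Num.floor (s * N%:R) + 1)%:~R / N%:R).
rewrite fmorph_div rmorph_int rmorph_nat.
have /andP[f1 f2] := floor_itv (s * N%:R).
rewrite ltr_pdivlMr // ltr_pdivrMr //; apply/andP; split; lra.
Qed.

Lemma nc_dig x n : l <= x < l + 1 -> nc ((dig x n)%:~R : R[i]) <= beta + 1.
Proof.
move=> hx; rewrite -(rmorph_int (real_complex R)) nc_real.
exact: dig_bound.
Qed.

Lemma wc_S g x n : wc g x n.+1 = - g * wc g x n - (dig x n)%:~R.
Proof. by []. Qed.

Lemma wc_uniform g x : l <= x < l + 1 -> 1 < nc g ->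
  (exists B, forall n, nc (wc g x n) <= B) ->
  forall n, nc (wc g x n) <= (beta + 1) / (nc g - 1).
Proof.
move=> hx hg [B hB]; H.
set r := nc g; set K := (beta + 1) / (r - 1).
have hr1 : 0 < r - 1 by lra.
have hK : K * (r - 1) = beta + 1 by rewrite /K divfK ?gt_eqF.
have hK0 : 0 <= K by rewrite /K divr_ge0 ?ltW //; lra.
have rec : forall n, r * nc (wc g x n) <= nc (wc g x n.+1) + (beta + 1).
  move=> n; rewrite /r -ncM.
  have -> : g * wc g x n = - wc g x n.+1 - (dig x n)%:~R by rewrite wc_S; ring.
  apply: le_trans (ncB _ _) _; rewrite ncN.
  have := nc_dig x n hx; lra.
have claim : forall j n, r ^+ j * nc (wc g x n) <= K * r ^+ j + B.
  elim => [|j IH] n.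
    rewrite expr0 !mul1r mulr1; have := hB n; lra.
  have hrj : 0 <= r ^+ j by rewrite exprn_ge0 //; lra.
  have h1 : r ^+ j * (r * nc (wc g x n)) <= r ^+ j * (nc (wc g x n.+1) + (beta + 1)).
    by rewrite ler_wpM2l.
  have h2 := IH n.+1.
  rewrite exprSr -mulrA; apply: le_trans h1 _.
  rewrite mulrDr; have -> : K * (r ^+ j * r) = K * r ^+ j + r ^+ j * (beta + 1).
    by rewrite -hK; ring.
  lra.
move=> n; rewrite leNgt; apply/negP => hlt.
have heps : 0 < nc (wc g x n) - K by lra.
have [j hj] := archi_pow r (B / (nc (wc g x n) - K)) hg.
move: hj; rewrite ltr_pdivrMr // => hj.
have := claim j n; lra.
Qed.

Lemma wc_periodic q N P g :
  (forall n, (N <= n)%N -> dig (ratr q) (n + P) = dig (ratr q) n) ->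
  root (map_poly ratr (Wp q (ratr q) (N + P) - Wp q (ratr q) N)) g ->
  forall n, (N <= n)%N -> wc g (ratr q) (n + P) = wc g (ratr q) n.
Proof.
move=> hper; rewrite rmorphB rootE /= hornerD hornerN !Wp_g subr_eq0 => /eqP h0.
have step : forall k, wc g (ratr q) (N + k + P) = wc g (ratr q) (N + k).
  elim => [|k IH]; first by rewrite addn0.
  by rewrite addnS addSn !wc_S IH hper // leq_addr.
by move=> n hn; rewrite -(subnKC hn) step.
Qed.

Lemma wc_bounded g x N P : (0 < P)%N ->
  (forall n, (N <= n)%N -> wc g x (n + P) = wc g x n) ->
  exists B, forall n, nc (wc g x n) <= B.
Proof.
move=> hP hper; exists (\sum_(i < N + P) nc (wc g x i)).
elim/ltn_ind => n IH.
case: (ltnP n (N + P)) => hn.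
  rewrite (bigD1 (Ordinal hn)) //=.
  have : 0 <= \sum_(i < N + P | i != Ordinal hn) nc (wc g x i).
    by apply: sumr_ge0 => i _; apply: nc_ge0.
  lra.
have hPn : (P <= n)%N by lia.
have hm : (N <= n - P)%N by lia.
rewrite -(subnK hPn) hper //; apply: IH; lia.
Qed.

Lemma intC (e : int) : ((e%:~R : R)%:C)%C = (e%:~R : R[i]).
Proof. by rewrite (rmorph_int (real_complex R)). Qed.

Lemma key_est g m : 1 < nc g ->
  (forall q : rat, l <= ratr q < l + 1 -> forall n,
      nc (wc g (ratr q) n) <= (beta + 1) / (nc g - 1)) ->
  nc g ^+ m * (nc ((beta%:C)%C - g) * ((l + 1) / 2)) <=
    2 * ((beta + 1) / (nc g - 1)) + nc g.
Proof.
move=> hg hK; H.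
set r := nc g; set K := (beta + 1) / (nc g - 1); set c0 := (l + 1) / 2.
have hc0 : l < c0 < l + 1 by rewrite /c0; apply/andP; split; lra.
have hc00 : 0 < c0 by rewrite /c0; lra.
have [a' [b' [ha hab hb2 hdig]]] := cyl m.+1 c0 (l + 1) (proj2 (andP hc0)).
have hin : forall v, a' < v < b' -> l <= v < l + 1.
  by move=> v /andP[v1 v2]; apply/andP; split; lra.
set mid := (a' + b') / 2.
have hmid : a' < mid < b' by rewrite /mid; apply/andP; split; lra.
set e := dig mid 0.
have hd0 : forall v, a' < v < b' -> dig v 0 = e.
  by move=> v hv; apply: hdig.
have hab' : - beta * b' - e%:~R < - beta * a' - e%:~R.
  by move: hab; rewrite ltb; lra.
have [aq /andP[haq1 haq2]] := rat_dense _ _ hab'.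
set A := (ratr aq : R).
set x' := (- (A + e%:~R)) / beta.
have hbx : beta * x' = - (A + e%:~R) by rewrite mulVb.
have hx' : a' < x' < b'.
  apply/andP; split; [rewrite ltb hbx| rewrite ltb hbx]; lra.
have hTx : T x' = A by rewrite T_dig0 hd0 // mulNr hbx; ring.
have hP : 0 < r ^+ m by rewrite exprn_gt0 //; lra.
set eta := (r ^+ m)^-1.
have heta : 0 < eta by rewrite invr_gt0.
have hlt : x' < Num.min b' (x' + eta).
  by rewrite lt_min; apply/andP; split; [case/andP: hx'|lra].
have [xq /andP[hxq1 hxq2]] := rat_dense _ _ hlt.
set X := (ratr xq : R).
move: hxq2; rewrite lt_min => /andP[hxq2 hxq3].
have hX : a' < X < b' by apply/andP; split; [case/andP: hx' => ? ?; lra|].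
have hdigs : forall k, (k < m)%N -> dig X k.+1 = dig A k.
  move=> k hk; rewrite -hTx -dig_shift; apply: hdig => //.
have hX1 : wc g X 1 = - g * (X%:C)%C - e%:~R by rewrite wc_S /= hd0.
have ident : forall k, (k <= m)%N ->
    wc g X k.+1 - wc g A k = (- g) ^+ k * (wc g X 1 - (A%:C)%C).
  elim => [|k IH] hk; first by rewrite expr0 mul1r.
  rewrite wc_S [wc g A _]wc_S hdigs // exprS -mulrA -IH; last by apply: ltnW.
  ring.
have hA : A%:C%C = - (beta%:C)%C * (x'%:C)%C - e%:~R.
  by rewrite -hTx T_dig0 hd0 // rmorphB rmorphM rmorphN rmorph_int.
have hD : wc g X 1 - (A%:C)%C = (beta%:C)%C * (x'%:C)%C - g * (X%:C)%C.
  by rewrite hX1 hA; ring.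
have hKX := hK xq (hin _ hX) m.+1.
have hAr : l <= A < l + 1 by rewrite -hTx T_range.
have hKA := hK aq hAr m.
have e1 : r ^+ m * nc ((beta%:C)%C * (x'%:C)%C - g * (X%:C)%C) <= 2 * K.
  rewrite /r -[nc g]ncN -ncX -ncM -hD -ident //.
  apply: le_trans (ncB _ _) _; rewrite /K; lra.
set D := (beta%:C)%C * (x'%:C)%C - g * (X%:C)%C.
have hxpos : 0 < x' by case/andP: hx' => ? ?; lra.
have hXx : 0 < X - x' by lra.
set u := nc ((beta%:C)%C - g).
have hu0 : 0 <= u by apply: nc_ge0.
have e2 : u * x' <= nc D + r * (X - x').
  have -> : u * x' = nc (((beta%:C)%C - g) * (x'%:C)%C).
    by rewrite ncM nc_real (ger0_norm (ltW hxpos)).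
  have -> : ((beta%:C)%C - g) * (x'%:C)%C = D + g * ((X - x')%:C)%C.
    by rewrite /D rmorphB /=; ring.
  by apply: le_trans (ncD _ _) _; rewrite ncM nc_real (ger0_norm (ltW hXx)).
have e3 : r ^+ m * (X - x') <= 1.
  have : X - x' < eta by lra.
  rewrite /eta -[(r ^+ m)^-1]mulr1 ltr_pdivlMl // => h; lra.
have e4 : r ^+ m * (u * c0) <= r ^+ m * (u * x').
  apply: ler_wpM2l; first exact: ltW.
  apply: ler_wpM2l => //; case/andP: hx' => ? ?; lra.
have e5 : r ^+ m * (u * x') <= r ^+ m * (nc D + r * (X - x')).
  exact: (ler_wpM2l (ltW hP) e2).
have e6 : r * (r ^+ m * (X - x')) <= r * 1.
  apply: ler_wpM2l => //; lra.
rewrite -/u; lra.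
Qed.

Lemma conj_eq g : 1 < nc g ->
  (forall q : rat, l <= ratr q < l + 1 -> forall n,
      nc (wc g (ratr q) n) <= (beta + 1) / (nc g - 1)) ->
  g = (beta%:C)%C.
Proof.
move=> hg hK; H.
case: (eqVneq g (beta%:C)%C) => // hne; exfalso.
set u := nc ((beta%:C)%C - g).
have hu : 0 < u.
  rewrite lt_def nc_ge0 andbT nc_eq0 subr_eq0 eq_sym; exact: hne.
have hc0 : 0 < (l + 1) / 2 by lra.
have hpos : 0 < u * ((l + 1) / 2) by apply: mulr_gt0.
have [j hj] := archi_pow (nc g) ((2 * ((beta + 1) / (nc g - 1)) + nc g) / (u * ((l + 1) / 2))) hg.
move: hj; rewrite ltr_pdivrMr // => hj.
have := key_est g j hg hK; lra.
Qed.

Lemma sign2 k : (-1 : rat) ^+ k * (-1) ^+ k = 1.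
Proof. by rewrite -exprMn mulrNN mulr1 expr1n. Qed.

Lemma monic_int_poly (q0 : rat) (n : nat) x N P : q0 = (n%:Q)^-1 -> (0 < n)%N -> (0 < P)%N ->
  ((-1) ^+ (N + P) * n%:Q) *: (Wp q0 x (N + P) - Wp q0 x N) \is monic /\
  ((-1) ^+ (N + P) * n%:Q) *: (Wp q0 x (N + P) - Wp q0 x N) \is a polyOver Num.int.
Proof.
move=> hq hn hP.
set c := (-1) ^+ (N + P) * n%:Q.
set M := c *: _.
have hnq : n%:Q * q0 = 1 by rewrite hq mulfV // pnatr_eq0 -lt0n.
have cint : c \is a Num.int by rewrite rpredM ?rpredX ?rpredN ?rpred1 ?rpred_nat.
have coefM : forall i, M`_i = c * ((Wp q0 x (N + P))`_i - (Wp q0 x N)`_i).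
  by move=> i; rewrite coefZ coefB.
have top : M`_(N + P) = 1.
  have hz : (Wp q0 x N)`_(N + P) = 0 by apply: coefW_high; lia.
  rewrite coefM coefW_top hz.
  rewrite subr0 /c.
  have -> : (-1) ^+ (N + P) * n%:Q * ((-1) ^+ (N + P) * q0) =
    ((-1) ^+ (N + P) * (-1) ^+ (N + P)) * (n%:Q * q0) by ring.
  by rewrite sign2 hnq mulr1.
have high : forall j, (N + P < j)%N -> M`_j = 0.
  move=> j hj; rewrite coefM !coefW_high ?subr0 ?mulr0 //; lia.
split.
  have hs1 : (size M <= (N + P).+1)%N by apply/leq_sizeP => j hj; apply: high.
  have hs2 : (N + P < size M)%N.
    rewrite ltnNge; apply/negP => /leq_sizeP /(_ _ (leqnn _)).
    by rewrite top => /eqP; rewrite oner_eq0.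
  rewrite monicE lead_coefE.
  have -> : size M = (N + P).+1 by apply/eqP; rewrite eqn_leq hs1 hs2.
  by rewrite /= top.
apply/polyOverP => i; case: (ltngtP i N) => [hi|hi|->].
- by rewrite coefM rpredM // rpredB // coefW_int //; lia.
- case: (ltngtP i (N + P)) => [hi2|hi2|->]; last by rewrite top rpred1.
  + by rewrite coefM (coefW_high _ _ _ _ hi) subr0 rpredM // coefW_int.
  + by rewrite high // rpred0.
rewrite coefM coefW_top.
have -> : c * ((Wp q0 x (N + P))`_N - (-1) ^+ N * q0) =
   c * (Wp q0 x (N + P))`_N - (-1) ^+ (N + P) * (-1) ^+ N * (n%:Q * q0).
  by rewrite /c; ring.
rewrite hnq mulr1; apply: rpredB.
  by apply: rpredM => //; apply: coefW_int; lia.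
by rewrite rpredM ?rpredX ?rpredN ?rpred1.
Qed.

Lemma rootQ q N P : l <= ratr q < l + 1 ->
  (forall n, (N <= n)%N -> dig (ratr q) (n + P) = dig (ratr q) n) ->
  root (map_poly ratr (Wp q (ratr q) (N + P) - Wp q (ratr q) N)) beta.
Proof.
move=> hq hpd; rewrite rmorphB rootE /= hornerD hornerN !Wp_beta.
by rewrite iter_periodic // subrr.
Qed.

Lemma main_sec :
  (forall x : R, is_rational x -> l <= x < l + 1 ->
     eventually_periodic (dig x)) ->
  Pisot beta \/ Salem beta.
Proof.
move=> hper; H.
set n := (Num.bound ((l + 1)^-1)).+1.
have hn0 : (0 < n)%N by [].
set q0 : rat := (n%:Q)^-1.
have hx0 : (ratr q0 : R) = (n%:R)^-1 by rewrite fmorphV rmorph_int.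
have hnR : 0 < (n%:R : R) by rewrite ltr0n.
have hxr : l <= ratr q0 < l + 1.
  rewrite hx0; apply/andP; split.
    by apply: le_trans hl0 _; rewrite invr_ge0 ltW.
  have hN : (l + 1)^-1 < n%:R.
    apply: lt_le_trans (archi_boundP _) _; first by rewrite invr_ge0; lra.
    by rewrite ler_nat.
  rewrite -(ltr_pM2l hnR) mulfV ?gt_eqF //.
  by move: hN; rewrite -[(l + 1)^-1]mulr1 ltr_pdivrMl //; lra.
have [N [P [hP hpd]]] := hper _ (ex_intro _ q0 erefl) hxr.
have hQ := rootQ q0 N P hxr hpd.
have [hMm hMi] := monic_int_poly q0 n (ratr q0) N P erefl hn0 hP.
set M := _ *: _ in hMm hMi.
have hMr : root (map_poly ratr M) beta.
  by rewrite /M map_polyZ rootE /= hornerZ (rootP hQ) mulr0.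
have [p hp] := minpoly_ex beta M (monic_neq0 hMm) hMr.
have hint := gauss_int p M (proj1 hp) hMm hMi (minpoly_dvd beta p M hp hMr).
have hconj : forall z, other_conjugate beta p z -> `|z| <= 1.
  move=> z [hz hne].
  rewrite real_leNgt ?real1 ?normr_real //; apply/negP => hz1.
  have hnz : 1 < nc z by rewrite -nc1 nc_lt normr1.
  move/eqP: hne; apply.
  apply: (conj_eq z hnz) => q hq m.
  have [N' [P' [hP' hpd']]] := hper _ (ex_intro _ q erefl) hq.
  have hr := rootQ q N' P' hq hpd'.
  have hz' := dvd_root _ z p _ (minpoly_dvd beta p _ hp hr) hz.
  apply: (wc_uniform z (ratr q) hq hnz _ m).
  exact: (wc_bounded z (ratr q) N' P' hP' (wc_periodic q N' P' z hpd' hz')).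
case: (classic (exists z, other_conjugate beta p z /\ `|z| = 1)) => [[z [hz h1]]|hno].
  right; split => //; exists p; split; first by split.
  by split => //; exists z.
left; split => //; exists p; split; first by split.
move=> z hz; rewrite lt_neqAle hconj // andbT.
by apply/eqP => h1; apply: hno; exists z.
Qed.

End Basic.

Theorem mainTheorem8 (R : realType) (beta l : R) :
  1 < beta -> -1 < l <= 0 ->
  (forall x : R, is_rational x -> l <= x < l + 1 ->
     eventually_periodic (negbeta_digit beta l x)) ->
  Pisot beta \/ Salem beta.
Proof.
move=> hb /andP[hl1 hl0] hper.
exact: main_sec hb hl1 hl0 hper.
Qed.
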